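(* Let $p$ be an odd prime and let $1\le \ell\le p-1$ be such that the Legendre symbol $\left(\frac{4\ell+1}{p}\right)=-1$. Then for all $n\ge0$, $$b\big(2(pn+\ell)\big)\equiv 0\pmod 4.$$ Furthermore, for every odd prime $p$ and all $n,k\ge0$, $$b\!\left(2p^{2k+2}n+\frac{p^{2k+2}-1}{2}\right)\equiv (-1)^{\frac{(k+1)(p-1)}{2}}\,p^{k+1}\,b(2n)\pmod 4.$$
   Context: The mock theta function $\mathcal{B}(q)=\sum_{n\ge0}\frac{q^n(-q;q^2)_n}{(q;q^2)_{n+1}}=\sum_{n\ge0}b(n)q^n$, where $(a;q)_n=\prod_{j=0}^{n-1}(1-aq^j)$. (The paper writes the second congruence equivalently as $b(2n)\equiv(-1)^{\frac{(k+1)(1-p)}{2}}p^{-k-1}b(\cdot)\pmod 4$, with $p^{-1}$ the inverse of $p$ modulo $4$.) *)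

(* Defs.v *)
From mathcomp Require Import all_boot all_order all_algebra intdiv.
Set Implicit Arguments. Unset Strict Implicit. Unset Printing Implicit Defensive.
Import GRing.Theory Num.Theory.
Local Open Scope ring_scope.

(* Truncation of the geometric series 1/(1 - q^k) to the terms of degree
   k*i with i <= N. *)
Definition geomN (k N : nat) : {poly int} := \sum_(i < N.+1) 'X^(k * i).

Definition negq_q2 (m : nat) : {poly int} := \prod_(j < m) (1 + 'X^(2 * j + 1)).

(* 1/(q;q^2)_{m+1} = prod_{j<=m} 1/(1 - q^(2j+1)), truncated (exact in degrees <= N) *)
Definition inv_q_q2 (m N : nat) : {poly int} := \prod_(j < m.+1) geomN (2 * j + 1) N.

(* b(n): coefficient of q^n in B(q) = sum_{m>=0} q^m (-q;q^2)_m/(q;q^2)_{m+1}.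
   Terms with m > n only contribute in degrees > n, and the truncated
   geometric series are exact in degrees <= n. *)
Definition b (n : nat) : int :=
  (\sum_(m < n.+1) 'X^m * negq_q2 m * inv_q_q2 m n)`_n.

Definition legendre (a p : nat) : int :=
  if (p %| a)%N then 0
  else if [exists x : 'I_p, (x ^ 2 == a %[mod p])%N] then 1 else -1.

(* Main.v *)
Require Import Defs.
From mathcomp Require Import all_boot all_order all_algebra intdiv.
From mathcomp Require Import ring lra zify.
Import GRing.Theory Num.Theory.
Set Implicit Arguments. Unset Strict Implicit. Unset Printing Implicit Defensive.
Open Scope nat_scope.

Lemma sum_ext K M (h : nat -> nat) : K <= M -> (forall t, K <= t -> h t = 0) ->
  \sum_(t < K) h t = \sum_(t < M) h t.
Proof.
move=> KM hv; rewrite (big_ord_widen M h KM) big_mkcond /=.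
apply: eq_bigr => t _; case: ifP => // /negbT; rewrite -leqNgt => /hv ->//.
Qed.

Lemma tri_shift K j (G : nat -> nat) : (forall m, K <= m -> G m = 0) ->
  \sum_(m < K) (if j < m then G m else 0) = \sum_(e < K) G (j + e + 1).
Proof.
move=> hv.
rewrite (@sum_ext K (j.+1 + K) (fun m => if j < m then G m else 0)); last 2 first.
- by rewrite leq_addl.
- by move=> t /hv ->; case: ifP.
rewrite big_split_ord /= big1 ?add0n; last first.
  by move=> i _; rewrite ltnNge -ltnS ltn_ord.
apply: eq_bigr => e _; rewrite /= ifT; first by congr G; lia.
by rewrite ltnS leq_addr.
Qed.

Lemma sym_nat K (F : nat -> nat -> nat) : (forall u v, F u v = F v u) ->
  \sum_(u < K) \sum_(v < K) F u v =
  \sum_(u < K) F u u + 2 * \sum_(u < K) \sum_(v < K) (if u < v then F u v else 0).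
Proof.
move=> hs; elim: K => [|K IH]; first by rewrite !big_ord0.
rewrite !big_ord_recr /=.
have e1 : \sum_(i < K) \sum_(i0 < K.+1) F i i0 = \sum_(i < K) \sum_(v < K) F i v + \sum_(i < K) F i K.
  by rewrite -big_split /=; apply: eq_bigr => i _; rewrite big_ord_recr.
have e2 : \sum_(i < K) \sum_(i0 < K.+1) (if i < i0 then F i i0 else 0) =
    \sum_(i < K) \sum_(v < K) (if i < v then F i v else 0) + \sum_(i < K) F i K.
  by rewrite -big_split /=; apply: eq_bigr => i _; rewrite big_ord_recr /= ltn_ord.
have e3 : \sum_(i < K) (if K < i then F K i else 0) = 0.
  by rewrite big1 // => i _; rewrite ltnNge ltnW.
have e4 : \sum_(i < K) F K i = \sum_(i < K) F i K.
  by apply: eq_bigr => i _; rewrite hs.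
rewrite e1 e2 e3 e4 IH ltnn; ring.

Qed.

Lemma sym_seq (T : Type) (s : seq T) (F : T -> T -> nat) : (forall u v, F u v = F v u) ->
  exists W, \sum_(u <- s) \sum_(v <- s) F u v = \sum_(u <- s) F u u + 2 * W.
Proof.
move=> hs; elim: s => [|x s [W IH]]; first by exists 0; rewrite !big_nil.
exists (W + \sum_(v <- s) F x v).
rewrite !big_cons.
have -> : \sum_(j <- s) \sum_(v <- x :: s) F j v = \sum_(j <- s) F x j + \sum_(j <- s) \sum_(v <- s) F j v.
  by rewrite -big_split /=; apply: eq_bigr => j _; rewrite big_cons hs.
rewrite IH; ring.
Qed.

Lemma sum_double K (h : nat -> nat) :
  \sum_(t < K.*2) h t = \sum_(e < K) (h e.*2 + h e.*2.+1).
Proof.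
elim: K => [|K IH]; first by rewrite !big_ord0.
by rewrite doubleS !big_ord_recr /= IH addnA.
Qed.

Lemma split_odd K (h : nat -> nat) : (forall e, h e.*2 = 0) -> (forall t, K <= t -> h t = 0) ->
  \sum_(t < K) h t = \sum_(e < K) h e.*2.+1.
Proof.
move=> hev hv.
rewrite (@sum_ext K (K.*2) h) //; last by rewrite -addnn leq_addr.
by rewrite sum_double; apply: eq_bigr => e _; rewrite hev.
Qed.

Definition A (n : nat) : nat := \sum_(m < n.+1) \sum_(i < n.+1) (n == m + (2 * m + 1) * i).
Definition B (n : nat) : nat := \sum_(m < n.+1) \sum_(j < m) \sum_(i < n.+1) \sum_(l < n)
   (n == m + (2 * m + 1) * i + (2 * j + 1) * l.+1).
Definition D (n : nat) : nat := \sum_(m < n.+1) ((2 * m + 1) * (2 * m + 1) == 2 * n + 1).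
Definition F4 (n j e i l : nat) : nat :=
  ((2 * j + 1) * (2 * i + 1) + 2 * (e + 1) * (2 * i + 1) + 2 * (l + 1) * (2 * j + 1) == 2 * n + 1).

Lemma eq21 n x : (n == x) = (2 * n + 1 == 2 * x + 1).
Proof. by rewrite eqn_add2r eqn_pmul2l. Qed.

Lemma B_eq n : B n = \sum_(j < n.+1) \sum_(e < n.+1) \sum_(i < n.+1) \sum_(l < n.+1) F4 n j e i l.
Proof.
rewrite /B.
have -> : \sum_(m < n.+1) \sum_(j < m) \sum_(i < n.+1) \sum_(l < n)
   (n == m + (2 * m + 1) * i + (2 * j + 1) * l.+1) =
   \sum_(m < n.+1) \sum_(j < n.+1) (if j < m then \sum_(i < n.+1) \sum_(l < n)
   (n == m + (2 * m + 1) * i + (2 * j + 1) * l.+1) else 0).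
  apply: eq_bigr => m _.
  rewrite (big_ord_widen n.+1 (fun j => \sum_(i < n.+1) \sum_(l < n)
   (n == m + (2 * m + 1) * i + (2 * j + 1) * l.+1)) (ltnW (ltn_ord m))).
  by rewrite big_mkcond.
rewrite exchange_big /=; apply: eq_bigr => j _.
rewrite (@tri_shift n.+1 j (fun m => \sum_(i < n.+1) \sum_(l < n)
   (n == m + (2 * m + 1) * i + (2 * j + 1) * l.+1))); last first.
  move=> m hm; rewrite big1 // => i _; rewrite big1 // => l _.
  by case: eqP => // h; move: hm; rewrite h -!addnA ltnNge leq_addr.
apply: eq_bigr => e _; apply: eq_bigr => i _.
rewrite big_ord_recr /=.
have -> : F4 n j e i n = 0.
  rewrite /F4; case: eqP => // h.
  have h1 : 2 * (n + 1) * (2 * j + 1) <= 2 * n + 1 by rewrite -h leq_addl.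
  have h2 : 2 * (n + 1) <= 2 * (n + 1) * (2 * j + 1) by rewrite leq_pmulr // addn1.
  lia.
rewrite addn0; apply: eq_bigr => l _.
rewrite /F4 (eq21 n) .
have -> : 2 * (j + e + 1 + (2 * (j + e + 1) + 1) * i + (2 * j + 1) * l.+1) + 1 =
  (2 * j + 1) * (2 * i + 1) + 2 * (e + 1) * (2 * i + 1) + 2 * (l + 1) * (2 * j + 1) by ring.
by rewrite eq_sym.
Qed.

Definition Fm (n m i : nat) : nat := ((2 * m + 1) * (2 * i + 1) == 2 * n + 1).

Lemma A_eq n : A n = \sum_(m < n.+1) \sum_(i < n.+1) Fm n m i.
Proof.
apply: eq_bigr => m _; apply: eq_bigr => i _.
rewrite /Fm (eq21 n).
have -> : 2 * (m + (2 * m + 1) * i) + 1 = (2 * m + 1) * (2 * i + 1) by ring.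
by rewrite eq_sym.
Qed.

Lemma Fm_big n m i : n < i -> Fm n m i = 0.
Proof.
move=> hi; rewrite /Fm; case: eqP => // h.
have h1 : 2 * i + 1 <= (2 * m + 1) * (2 * i + 1) by rewrite leq_pmull // addn1.
lia.
Qed.

Lemma P_Fix n : ~~ odd n ->
  \sum_(m < n.+1) \sum_(i < n.+1) (if m < i then Fm n m i else 0) =
  \sum_(j < n.+1) \sum_(e < n.+1) F4 n j e j e.
Proof.
move=> ev; apply: eq_bigr => m _.
rewrite (@tri_shift n.+1 m (fun i => Fm n m i)); last by move=> i hi; apply: Fm_big.
rewrite (@split_odd n.+1 (fun t => Fm n m (m + t + 1))); first last.
- by move=> t ht; apply: Fm_big; lia.
- move=> e; rewrite /Fm; case: eqP => // h.
  have hn : n = (n./2).*2 by rewrite -[LHS](odd_double_half n) (negbTE ev).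
  have : (2 * m + 1) * (2 * (m + e.*2 + 1) + 1) = 4 * (m * m + 2 * m * e + 2 * m + e) + 3.
    by rewrite -muln2; ring.
  rewrite h => e4; move: hn; rewrite -muln2 => hn; lia.
apply: eq_bigr => e _; rewrite /Fm /F4.
have -> : (2 * m + 1) * (2 * (m + e.*2.+1 + 1) + 1) =
   (2 * m + 1) * (2 * m + 1) + 2 * (e + 1) * (2 * m + 1) + 2 * (e + 1) * (2 * m + 1).
  by rewrite -addn1 -muln2; ring.
by [].
Qed.

Lemma F4_sym n j e i l : F4 n j e i l = F4 n i l j e.
Proof.
rewrite /F4; congr (nat_of_bool (_ == _)); ring.
Qed.

Lemma B_sym n : exists W, B n = \sum_(j < n.+1) \sum_(e < n.+1) F4 n j e j e + 2 * W.
Proof.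
have [W hW] := @sym_seq _ (index_enum ('I_n.+1 * 'I_n.+1)%type)
   (fun u v => F4 n u.1 u.2 v.1 v.2) (fun u v => F4_sym n u.1 u.2 v.1 v.2).
exists W; rewrite B_eq pair_big /=.
under eq_bigr do rewrite pair_big /=.
rewrite [X in _ = X + _]pair_big /=.
exact: hW.
Qed.

Lemma AB_mod n : ~~ odd n -> exists W, A n + B n * 2 = D n + 4 * W.
Proof.
move=> ev; have [W hW] := B_sym n.
have hA := @sym_nat n.+1 (Fm n) (fun u v => ltac:(by rewrite /Fm mulnC)).
exists (\sum_(j < n.+1) \sum_(e < n.+1) F4 n j e j e + W).
rewrite A_eq hA P_Fix // hW /D.
have -> : \sum_(u < n.+1) Fm n u u = \sum_(m < n.+1) ((2 * m + 1) * (2 * m + 1) == 2 * n + 1) by [].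
ring.
Qed.

Lemma D_nsq n : (forall x, x * x <> 2 * n + 1) -> D n = 0.
Proof. by move=> h; rewrite /D big1 // => m _; case: eqP => // /h. Qed.

Lemma D_sq n x : x * x = 2 * n + 1 -> D n = 1.
Proof.
move=> hx.
have ox : odd x.
  by move: (congr1 odd hx); rewrite oddM andbb addn1 /= oddM /= => ->.
have hx2 : x = 2 * x./2 + 1 by rewrite -[LHS](odd_double_half x) ox addnC -muln2 mulnC.
have hm : x./2 < n.+1.
  have : x <= x * x by rewrite leq_pmulr // lt0n; apply/eqP => x0; rewrite x0 in ox.
  lia.
rewrite /D (bigD1 (Ordinal hm)) //= -hx2 hx eqxx big1 // => i /eqP ne.
case: eqP => // h; exfalso; apply: ne; apply: val_inj => /=.
have : (2 * i + 1) ^ 2 == x ^ 2 by rewrite !expnS !expn0 !muln1 h hx.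
rewrite eqn_sqr hx2 => /eqP; lia.
Qed.

Open Scope ring_scope.
Notation R4 := ('Z_4).
Notation P4 := {poly R4}.
Definition phi : int -> R4 := fun z => z%:~R.
Definition g4 (k n : nat) : P4 := \sum_(i < n.+1) 'X^(k * i).
Definition H4 (k n : nat) : P4 := \sum_(i < n) 'X^(k * i.+1).
Definition T4 (n : nat) : P4 :=
  \sum_(m < n.+1) 'X^m * (\prod_(j < m) (1 + 'X^(2 * j + 1))) * \prod_(j < m.+1) g4 (2 * j + 1) n.
Lemma term_map n (m : nat) : map_poly (intr : int -> R4) ('X^m * negq_q2 m * inv_q_q2 m n) = 'X^m * (\prod_(j < m) (1 + 'X^(2 * j + 1))) * \prod_(j < m.+1) g4 (2 * j + 1) n.
Proof.
rewrite !rmorphM /= rmorphXn /= map_polyX /negq_q2 /inv_q_q2 !rmorph_prod /=.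
congr (_ * _ * _).
  apply: eq_bigr => j _.
  by rewrite rmorphD /= rmorphXn /= map_polyX rmorph1.
apply: eq_bigr => j _.
rewrite /geomN /g4 rmorph_sum; apply: eq_bigr => i _.
by rewrite rmorphXn /= map_polyX.
Qed.
Lemma b_T4 n : (b n)%:~R = (T4 n)`_n :> R4.
Proof.
have -> : (b n)%:~R = (map_poly (intr : int -> R4) (\sum_(m < n.+1) 'X^m * negq_q2 m * inv_q_q2 m n))`_n.
  by rewrite coef_map_id0 // mulr0z.
rewrite /T4 rmorph_sum /=.
under eq_bigr do rewrite term_map. by [].
Qed.
Definition eqt (n : nat) (p q : P4) := forall i, (i <= n)%N -> p`_i = q`_i.
Lemma eqt_refl n p : eqt n p p. Proof. by []. Qed.
Lemma eqt_add n p p' q q' : eqt n p p' -> eqt n q q' -> eqt n (p + q) (p' + q').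
Proof. by move=> hp hq i hi; rewrite !coefD hp ?hq. Qed.
Lemma eqt_mul n p p' q q' : eqt n p p' -> eqt n q q' -> eqt n (p * q) (p' * q').
Proof.
move=> hp hq i hi; rewrite !coefM; apply: eq_bigr => j _.
rewrite hp ?hq //; first by rewrite (leq_trans (leq_subr _ _) hi).
by rewrite (leq_trans _ hi) // -ltnS.
Qed.
Lemma eqt_sum n m (F G : 'I_m -> P4) : (forall j, eqt n (F j) (G j)) ->
  eqt n (\sum_(j < m) F j) (\sum_(j < m) G j).
Proof.
move=> h i hi; rewrite !coef_sum; apply: eq_bigr => j _; exact: h.
Qed.
Lemma eqt_prod n m (F G : nat -> P4) : (forall j, eqt n (F j) (G j)) ->
  eqt n (\prod_(j < m) F j) (\prod_(j < m) G j).
Proof.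
move=> h; elim: m => [|m IH]; first by rewrite !big_ord0.
by rewrite !big_ord_recr /=; apply: eqt_mul.
Qed.
Lemma eqt_hi n k : (0 < k)%N -> eqt n ('X^(k * n.+1)) 0.
Proof.
move=> k0 i hi; rewrite coefXn coef0.
case: eqP => // e; move: hi; rewrite e.
by rewrite leqNgt (leq_trans (ltnSn n)) // leq_pmull.
Qed.
Lemma g4_split k n : g4 k n = 1 + H4 k n.
Proof.
rewrite /g4 big_ord_recl muln0 expr0; congr (_ + _).
Qed.
Lemma Xg4 k n : 'X^k * g4 k n = H4 k n + 'X^(k * n.+1).
Proof.
rewrite /g4 mulr_sumr big_ord_recr /= /H4 -exprD -mulnS; congr (_ + _).
by apply: eq_bigr => i _; rewrite -exprD mulnS.
Qed.
Lemma factor_eqt n k : (0 < k)%N -> eqt n ((1 + 'X^k) * g4 k n) (1 + H4 k n *+ 2).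
Proof.
move=> k0.
have -> : (1 + 'X^k) * g4 k n = (1 + H4 k n *+ 2) + 'X^(k * n.+1).
  by rewrite mulrDl mul1r Xg4 g4_split mulr2n !addrA.
rewrite -[X in eqt _ _ X]addr0; apply: eqt_add => //; exact: eqt_hi.
Qed.
Lemma four0P (p : P4) : p *+ 4 = 0.
Proof.
apply/polyP => i; rewrite coefMn coef0 -mulr_natr.
have h4 : (4%:R : R4) = 0 by exact: pchar_Zp.
by rewrite h4 mulr0.
Qed.
Lemma prod2 m (h : nat -> P4) : \prod_(j < m) (1 + h j *+ 2) = 1 + (\sum_(j < m) h j) *+ 2.
Proof.
elim: m => [|m IH]; first by rewrite !big_ord0 mul0rn addr0.
rewrite !big_ord_recr /= IH.
have -> : (1 + (\sum_(i < m) h i) *+ 2) * (1 + h m *+ 2) =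
   1 + (\sum_(i < m) h i + h m) *+ 2 + ((\sum_(i < m) h i) * h m) *+ 4 by ring.
by rewrite four0P addr0.
Qed.
Definition T4' (n : nat) : P4 :=
  \sum_(m < n.+1) 'X^m * g4 (2 * m + 1) n * (1 + (\sum_(j < m) H4 (2 * j + 1) n) *+ 2).
Lemma T4_eqt n : eqt n (T4 n) (T4' n).
Proof.
apply: eqt_sum => m.
rewrite big_ord_recr /=.
have -> : 'X^m * \prod_(j < m) (1 + 'X^(2 * j + 1)) *
    (\prod_(i < m) g4 (2 * i + 1) n * g4 (2 * m + 1) n) =
  'X^m * g4 (2 * m + 1) n * \prod_(j < m) ((1 + 'X^(2 * j + 1)) * g4 (2 * j + 1) n).
  by rewrite big_split /=; ring.
apply: eqt_mul => //; rewrite -(prod2 m (fun j => H4 (2 * j + 1) n)).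
by apply: (@eqt_prod n m (fun j => (1 + 'X^(2*j+1)) * g4 (2*j+1) n) (fun j => 1 + H4 (2*j+1) n *+ 2)) => j; apply: factor_eqt; rewrite addn1.
Qed.
Lemma coefT4' n : (T4' n)`_n = (A n + B n * 2)%N%:R.
Proof.
rewrite /T4' /A /B natrD natrM mulr_natr !natr_sum -sumrMnl coef_sum -big_split /=.
apply: eq_bigr => m _.
rewrite mulrDr mulr1 coefD mulrnAr coefMn; congr (_ + _).
  rewrite /g4 mulr_sumr coef_sum natr_sum; apply: eq_bigr => i _.
  by rewrite -exprD coefXn.
congr (_ *+ 2).
rewrite mulr_sumr coef_sum natr_sum; apply: eq_bigr => j _.
rewrite /g4 /H4 mulr_sumr coef_sum exchange_big natr_sum; apply: eq_bigr => l _.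
rewrite mulr_sumr mulr_suml coef_sum natr_sum; apply: eq_bigr => i _.
by rewrite -!exprD coefXn.
Qed.

Lemma b_AB n : (b n)%:~R = (A n + B n * 2)%N%:R :> R4.
Proof. by rewrite b_T4 (T4_eqt (leqnn n)) coefT4'. Qed.

Lemma Z4_nat (a : nat) : (a%:R : R4) = 0 -> (4 %| a)%N.
Proof.
move=> h; have := val_Zp_nat (p:=4) isT a.
rewrite h /= => h'.
by rewrite /dvdn; apply/eqP; rewrite -h'.
Qed.

Lemma Z4_dvd (w : int) : (w%:~R : R4) = 0 -> (4 %| w)%Z.
Proof.
case: w => a h; rewrite dvdzE /=; apply: Z4_nat => //.
by move: h; rewrite NegzE mulrNz => /eqP; rewrite oppr_eq0 => /eqP.
Qed.

Lemma b_even4 N : (b (2 * N))%:~R = (D (2 * N))%:R :> R4.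
Proof.
have ev : ~~ odd (2 * N) by rewrite oddM.
have [W hW] := AB_mod ev.
rewrite b_AB hW natrD natrM.
have -> : (4%:R : R4) = 0 by exact: pchar_Zp.
by rewrite mul0r addr0.
Qed.

Lemma Z4_eq (x y : int) : (x%:~R : R4) = y%:~R -> (x = y %[mod 4])%Z.
Proof.
move=> h; apply/eqP; rewrite eqz_mod_dvd; apply: Z4_dvd.
by rewrite rmorphB /= h subrr.
Qed.

Lemma b_even N : (b (2 * N) = (D (2 * N))%:Z %[mod 4])%Z.
Proof. by apply: Z4_eq; rewrite b_even4. Qed.

Lemma part1 (p l : nat) : prime p -> odd p -> (1 <= l <= p - 1)%N ->
     legendre (4 * l + 1) p = -1 ->
     forall n : nat, (b (2 * (p * n + l)) = 0 %[mod 4])%Z.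
Proof.
move=> pp op hl hleg n.
rewrite b_even D_nsq // => x hx.
move: hleg; rewrite /legendre; case: ifP => // _.
have p0 : (0 < p)%N by exact: prime_gt0.
have ex : [exists y : 'I_p, (y ^ 2 == 4 * l + 1 %[mod p])%N].
  apply/existsP; exists (Ordinal (ltn_pmod x p0)) => /=.
  rewrite modnXm expnS expn1 hx.
  have -> : (2 * (2 * (p * n + l)) + 1 = (4 * n) * p + (4 * l + 1))%N by ring.
  by rewrite modnMDl.
by rewrite ex.
Qed.

Lemma sign4 (p k : nat) : odd p ->
  (((-1) ^+ ((k + 1) * (p - 1) %/ 2) * (p ^ (k + 1))%:Z)%:~R : R4) = 1.
Proof.
move=> op.
set s := p./2.
have hp : p = (2 * s + 1)%N by rewrite -[LHS](odd_double_half p) op addnC -muln2 mulnC.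
have -> : ((k + 1) * (p - 1) %/ 2 = (k + 1) * s)%N.
  by rewrite hp addnK mulnCA mulKn.
rewrite rmorphM /= rmorphXn /= rmorphN /= rmorph1.
have -> : (((p ^ (k + 1))%N)%:Z)%:~R = ((p%:R : R4) ^+ (k + 1)) by rewrite -natrX.
rewrite mulnC exprM -exprMn.
have -> : (-1) ^+ s * (p%:R : R4) = 1; last by rewrite expr1n.
rewrite hp.
have h4 : (4%:R : R4) = 0 by exact: pchar_Zp.
rewrite -[s](odd_double_half s); case: (odd s) => /=.
  have -> : (2 * (1 + s./2.*2) + 1 = 4 * s./2 + 3)%N by rewrite -muln2; ring.
  rewrite natrD natrM h4 mul0r add0r exprD expr1 -muln2 mulnC exprM sqrrN !expr1n mulr1.
  have h3 : (3%:R : R4) = -1 by apply/eqP; rewrite -subr_eq0 opprK -(natrD _ 3 1) h4.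
  by rewrite h3 mulN1r opprK.
rewrite add0n.
have -> : (2 * s./2.*2 + 1 = 4 * s./2 + 1)%N by rewrite -muln2; ring.
rewrite natrD natrM h4 mul0r add0r -muln2 mulnC exprM sqrrN expr1n expr1n.
by rewrite mulr1.
Qed.

Lemma D_scale (q n : nat) : odd q ->
  D (2 * ((q * q) * n + (q./2) * (q./2).+1)) = D (2 * n).
Proof.
move=> oq; set h := q./2.
have hq : q = (2 * h + 1)%N by rewrite -[LHS](odd_double_half q) oq addnC -muln2 mulnC.
have q0 : (0 < q)%N by rewrite hq addn1.
have key : (2 * (2 * (q * q * n + h * h.+1)) + 1 = (q * q) * (2 * (2 * n) + 1))%N.
  by rewrite hq -[h.+1]addn1; ring.
case: (boolP [exists x : 'I_(4 * n + 2), (x * x == 2 * (2 * n) + 1)%N]).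
  move=> /existsP [x /eqP hx].
  rewrite (D_sq hx); apply: (@D_sq _ (q * x)).
  by rewrite key -hx; ring.
move=> hne.
have hn : forall x, (x * x <> 2 * (2 * n) + 1)%N.
  move=> x hx; move/negP: hne; apply; apply/existsP.
  have hlt : (x < 4 * n + 2)%N.
    have : (x <= x * x)%N by case: (x) hx => // x0 _; rewrite leq_pmulr.
    lia.
  by exists (Ordinal hlt); rewrite /= hx.
rewrite (D_nsq hn); apply: D_nsq => y hy.
have hd : (q ^ 2 %| y ^ 2)%N by rewrite !expnS !expn0 !muln1 hy key dvdn_mulr.
rewrite dvdn_pexp2r // in hd.
case/dvdnP: hd => z hz.
apply: (hn z).
move: hy; rewrite key hz.
have -> : (z * q * (z * q) = (q * q) * (z * z))%N by ring.
by move/eqP; rewrite eqn_pmul2l ?muln_gt0 ?q0 // => /eqP.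
Qed.

Lemma part2 (p : nat) : prime p -> odd p ->
     forall n k : nat,
       (b (2 * p ^ (2 * k + 2) * n + (p ^ (2 * k + 2) - 1) %/ 2)
        = (-1) ^+ ((k + 1) * (p - 1) %/ 2) * (p ^ (k + 1))%:Z * b (2 * n) %[mod 4])%Z.
Proof.
move=> pp op n k.
set q := (p ^ (k + 1))%N.
have oq : odd q by rewrite /q oddX op orbT.
set h := q./2.
have hq : q = (2 * h + 1)%N by rewrite -[LHS](odd_double_half q) oq addnC -muln2 mulnC.
have hP : (p ^ (2 * k + 2) = q * q)%N by rewrite /q -expnD; congr (expn p _); ring.
have -> : (2 * p ^ (2 * k + 2) * n + (p ^ (2 * k + 2) - 1) %/ 2 =
    2 * ((q * q) * n + h * h.+1))%N.
  rewrite hP.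
  have -> : (q * q - 1 = 2 * (2 * (h * h.+1)))%N by rewrite {1 2}hq; lia.
  rewrite mulKn //; ring.
apply: Z4_eq.
rewrite b_even4 D_scale // rmorphM /= sign4 // mul1r b_even4.
by [].
Qed.

Theorem theorem1p5 :
  (forall (p l : nat), prime p -> odd p -> (1 <= l <= p - 1)%N ->
     legendre (4 * l + 1) p = -1 ->
     forall n : nat, (b (2 * (p * n + l)) = 0 %[mod 4])%Z)
  /\
  (forall p : nat, prime p -> odd p ->
     forall n k : nat,
       (b (2 * p ^ (2 * k + 2) * n + (p ^ (2 * k + 2) - 1) %/ 2)
        = (-1) ^+ ((k + 1) * (p - 1) %/ 2) * (p ^ (k + 1))%:Z * b (2 * n) %[mod 4])%Z).
Proof. split; [exact: part1 | exact: part2]. Qed.
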